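(* Let $n\neq 5$. Then $V(n,2)=\bigcup_{l=1}^{\lfloor n/2\rfloor}W_l$, and this union is a mutually disjoint union of the $W_l$.
   Context: Let $S=K[x_1,\ldots,x_n]$ over a field $K$; $G(I)$ is the minimal monomial generating set of a monomial ideal $I$. With $\sigma$ the bijection $x_{i_1}\cdots x_{i_k}\mapsto\{i_1,\ldots,i_k\}$ from square-free monomials to subsets of $[n]$, the facet complex $\delta_{\mathcal{F}}(I)$ has facets $\sigma(g)$, $g\in G(I)$, the Stanley–Reisner complex is $\delta_{\mathcal{N}}(I)=\{\sigma(g)\mid g \text{ square-free monomial},\ g\notin I\}$, and a square-free monomial ideal $I$ is an $f$-ideal if both complexes have the same $f$-vector. $V(n,2)$ is the set of $f$-ideals of $S$ all of whose minimal generators have degree $2$. For a nonempty proper $B\subset[n]$ with complement $\overline B$, $W_B=\{x_ix_j\mid i\neq j,\ i,j\in B\text{ or } i,j\in\overline B\}$. An $f$-ideal $I$ with $G(I)$ consisting of square-free monomials of degree 2 is of $l$ type if $W_B\subseteq G(I)$ for some $B\subseteq[n]$ with $|B|=l$; $W_l$ denotes the set of $f$-ideals of $S$ of $l$ type. *)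

(* Defs.v *)
(* Combinatorial encoding of square-free monomial ideals of
   S = K[x_1..x_n]: via sigma, a square-free monomial ideal I is determined by
   its minimal generating set G(I), encoded as the set {sigma(g) | g in G(I)}
   of subsets of [n] = 'I_n (an antichain).  A square-free monomial m lies in I
   iff some generator divides m, i.e. sigma(g) \subset sigma(m) for some g. *)
From mathcomp Require Import all_boot.
Set Implicit Arguments. Unset Strict Implicit. Unset Printing Implicit Defensive.

Definition min_gens (n : nat) (G : {set {set 'I_n}}) : Prop :=
  forall A B, A \in G -> B \in G -> A \subset B -> A = B.

Definition facet_complex (n : nat) (G : {set {set 'I_n}}) : {set {set 'I_n}} :=
  [set F : {set 'I_n} | [exists g in G, F \subset g]].

(* Stanley-Reisner complex: sigma(m) for square-free monomials m not in I *)
Definition sr_complex (n : nat) (G : {set {set 'I_n}}) : {set {set 'I_n}} :=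
  [set F : {set 'I_n} | [forall g in G, ~~ (g \subset F)]].

(* f-vector entry: number of faces with k vertices (dimension k-1) *)
Definition fvec (n : nat) (C : {set {set 'I_n}}) (k : nat) : nat :=
  #|[set F in C | #|F| == k]|.

Definition f_ideal (n : nat) (G : {set {set 'I_n}}) : Prop :=
  min_gens G /\ forall k, fvec (facet_complex G) k = fvec (sr_complex G) k.

Definition in_V2 (n : nat) (G : {set {set 'I_n}}) : Prop :=
  f_ideal G /\ forall g, g \in G -> #|g| = 2.

Definition W_B (n : nat) (B : {set 'I_n}) : {set {set 'I_n}} :=
  [set e : {set 'I_n} | (#|e| == 2) && ((e \subset B) || (e \subset ~: B))].

Definition in_W (n l : nat) (G : {set {set 'I_n}}) : Prop :=
  in_V2 G /\ exists B : {set 'I_n},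
    [/\ 0 < #|B| < n, #|B| = l & W_B B \subset G].

(* Main.v *)
Require Import Defs.
From mathcomp Require Import all_boot zify.
Set Implicit Arguments. Unset Strict Implicit. Unset Printing Implicit Defensive.
From Stdlib Require Import Classical.
Definition deg (T : finType) (r : rel T) (U : {set T}) x := #|[set y in U | r x y]|.
Definition DD (T : finType) (r : rel T) (U : {set T}) := \sum_(x in U) deg r U x.
Definition bip (T : finType) (r : rel T) (U X : {set T}) :=
  forall x y, x \in U -> y \in U -> r x y -> (x \in X) != (y \in X).

Lemma sum_bool_card (T : finType) (A : {set T}) (P : pred T) :
  \sum_(x in A) (P x : nat) = #|[set x in A | P x]|.
Proof.
rewrite -sum1_card big_mkcond /= [RHS]big_mkcond /=.
apply: eq_bigr => x _; rewrite inE; by case: (x \in A); case: (P x).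
Qed.

Lemma DD_del (T : finType) (r : rel T) (U : {set T}) w :
  (forall x y, r x y = r y x) -> (forall x, ~~ r x x) -> w \in U ->
  DD r U = DD r (U :\ w) + 2 * deg r U w.
Proof.
move=> rs ri wU; rewrite /DD (bigD1 w) //=.
rewrite (eq_bigl (fun x => x \in U :\ w)); last by move=> x; rewrite in_setD1 andbC.
have E: forall x, x \in U :\ w -> deg r U x = deg r (U :\ w) x + r x w.
  move=> x xU; rewrite /deg (cardsD1 w) inE wU /= addnC; congr (_ + _).
  apply: eq_card => y; rewrite !inE andbA //.
rewrite (eq_bigr _ E) big_split /= sum_bool_card.
have ->: #|[set x in U :\ w | r x w]| = deg r U w.
  rewrite /deg; apply: eq_card => y; rewrite !inE rs.
  by case: (y =P w) => [->|/eqP/negbTE]; rewrite ?(negbTE (ri w)) ?andbF ?eqxx //= => ->.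
rewrite mul2n -addnn; lia.
Qed.

Lemma DD_min (T : finType) (r : rel T) (U : {set T}) w :
  (forall x, x \in U -> deg r U w <= deg r U x) -> #|U| * deg r U w <= DD r U.
Proof.
move=> h; rewrite -sum_nat_const; exact: leq_sum.
Qed.

Definition DP (T : finType) (r : rel T) (U : {set T}) :=
  #|[set p : T * T | [&& p.1 \in U, p.2 \in U & r p.1 p.2]]|.

Lemma DD_DP (T : finType) (r : rel T) (U : {set T}) : DD r U = DP r U.
Proof.
rewrite /DP -sum1dep_card.
rewrite -(pair_big_dep (fun x => x \in U) (fun x y => (y \in U) && r x y) (fun _ _ => 1)) /=.
apply: eq_bigr => x _; rewrite sum1dep_card /deg; apply: eq_card => y; by rewrite !inE.
Qed.

Lemma bip_ext (T : finType) (r : rel T) (U X : {set T}) w (b : bool) :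
  (forall x y, r x y = r y x) -> (forall x, ~~ r x x) -> w \in U ->
  bip r (U :\ w) X -> (forall y, y \in U -> r w y -> (y \in X) != b) ->
  bip r U [set x | if x == w then b else x \in X].
Proof.
move=> rs ri wU hb hn x y xU yU rxy; rewrite !inE.
have [exw|nxw] := eqVneq x w; have [eyw|nyw] := eqVneq y w.
- by subst; rewrite (negbTE (ri w)) in rxy.
- by subst x; rewrite eq_sym; apply: hn.
- by subst y; rewrite rs in rxy; apply: hn.
- by apply: hb => //; rewrite in_setD1 ?nxw ?nyw.
Qed.

Lemma amgm a b : 4*(a*b) <= (a+b)*(a+b).
Proof. have [h|h] := leqP a b.
  have -> : b = a + (b - a) by lia. nia.
have -> : a = b + (a - b) by lia. nia. Qed.
Lemma ar2 a b s t k DU DU' d : DU = DU' + 2*d -> DU' + 2*(s*t) <= 2*(a*b) -> d = s + t ->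
  1 <= s <= a -> 1 <= t <= b -> a + b + 1 = k -> k * d <= DU -> 5 <= k /\ 2*DU + 2*k <= k*k+5.
Proof.
move=> h1 h2 h3 h4 h5 h6 h7.
have h8: s + t <= s*t + 1 by nia.
have h9 := amgm a b.
split; last by nia.
have h10: DU <= 2*(a*b) + 2 by lia.
have h11: k * 2 <= k * d by apply: leq_mul; lia.
have h12: a + b <= a * b by lia.
have [ha|ha]: a = 1 \/ 2 <= a by lia.
  subst a; lia.
have [hb|hb]: b = 1 \/ 2 <= b by lia.
  subst b; lia.
lia.
Qed.
Lemma ar1 k DU DU' d : 5 <= k -> 2*DU' + 2*k <= k*k+5 -> DU = DU' + 2*d -> (k.+1) * d <= DU ->
  2*DU + 2*k.+1 <= k.+1*k.+1+5.
Proof.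
move=> h1 h2 h3 h4.
have [hk5|hk] : k = 5 \/ 6 <= k by lia.
  subst k; lia.
nia.
Qed.

Lemma main_bound (T : finType) (r : rel T) :
  (forall x y, r x y = r y x) -> (forall x, ~~ r x x) ->
  (forall x y z, r x y -> r y z -> r x z -> False) ->
  forall k (U : {set T}), #|U| = k -> (forall X, ~ bip r U X) ->
  5 <= k /\ 2 * DD r U + 2 * k <= k * k + 5.
Proof.
move=> rs ri rt; elim=> [|k IH] U hU hnb.
  exfalso; apply: (hnb set0) => x y; move/eqP: hU; rewrite cards_eq0 => /eqP ->.
  by rewrite inE.
have [w0 w0U]: exists w0, w0 \in U by apply/card_gt0P; rewrite hU.
case: (arg_minnP (deg r U) w0U) => w wU0 wmin.
have wU : w \in U := wU0.
have hU': #|U :\ w| = k by move: hU; rewrite (cardsD1 w) wU; case.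
have hDel := DD_del rs ri wU.
have hMin : #|U| * deg r U w <= DD r U := DD_min wmin.
rewrite hU in hMin.
case: (classic (exists X, bip r (U :\ w) X)) => [[X hX]|hnb']; last first.
  have [h5 hb] := IH _ hU' (fun X h => hnb' (ex_intro _ X h)).
  split; first lia.
  exact: ar1 h5 hb hDel hMin.
set N := [set y in U | r w y].
have NsubU: forall y, y \in N -> y \in U :\ w.
  move=> y; rewrite !inE => /andP[yU rwy]; rewrite yU andbT.
  by apply/eqP => eyw; subst y; rewrite (negbTE (ri w)) in rwy.
have [s sN sX]: exists2 s, s \in N & s \in X.
  case: (classic (exists2 s, s \in N & s \in X)) => // hno; exfalso.
  apply: (hnb [set x | if x == w then true else x \in X]); apply: bip_ext => // y yU rwy.
  have: y \notin X by apply/negP=> yX; apply: hno; exists y => //; rewrite inE yU rwy.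
  by case: (y \in X).
have [t tN tX]: exists2 t, t \in N & t \notin X.
  case: (classic (exists2 t, t \in N & t \notin X)) => // hno; exfalso.
  apply: (hnb [set x | if x == w then false else x \in X]); apply: bip_ext => // y yU rwy.
  have: y \in X by apply/negPn/negP=> yX; apply: hno; exists y => //; rewrite inE yU rwy.
  by case: (y \in X).
set S := N :&: X. set Tt := N :\: X.
set A := (U :\ w) :&: X. set B := (U :\ w) :\: X.
have hN : deg r U w = #|S| + #|Tt| by rewrite /deg cardsID.
have hAB : #|A| + #|B| = k by rewrite cardsID.
have SA : S \subset A.
  apply/subsetP => y; rewrite !in_setI => /andP[yN yX]; apply/andP; split => //; exact: (NsubU y yN).
have TB : Tt \subset B.
  by apply/subsetP => y; rewrite in_setD => /andP[yX yN]; rewrite in_setD; apply/andP; split => //; exact: (NsubU y yN).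
have hs : 0 < #|S| by apply/card_gt0P; exists s; rewrite in_setI sN sX.
have ht : 0 < #|Tt| by apply/card_gt0P; exists t; rewrite in_setD tN tX.
have hsa := subset_leq_card SA.
have htb := subset_leq_card TB.
have hcount : DD r (U :\ w) + 2 * (#|S| * #|Tt|) <= 2 * (#|A| * #|B|).
  rewrite DD_DP /DP.
  set P := [set p | _].
  have sub: P \subset (setX A B :\: setX S Tt) :|: (setX B A :\: setX Tt S).
    apply/subsetP => -[x y]; rewrite inE /= => /and3P[xU yU rxy].
    have := hX x y xU yU rxy.
    move: xU yU; rewrite !in_setD1 => /andP[xw xU] /andP[yw yU].
    rewrite !inE xw yw xU yU /=; case hx: (x \in X); case hy: (y \in X) => //= _;
      rewrite ?andbT ?andbF ?orbF //=; apply/negP => /and3P[a _ b] || apply/negP => /andP[a b];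
      exact: rt a rxy b.
  have c1: #|setX A B :\: setX S Tt| = #|A|*#|B| - #|S|*#|Tt|.
    by rewrite cardsDS ?cardsX // setXS.
  have c2: #|setX B A :\: setX Tt S| = #|B|*#|A| - #|Tt|*#|S|.
    by rewrite cardsDS ?cardsX // setXS.
  have := subset_leq_card sub.
  have := leq_card_setU (setX A B :\: setX S Tt) (setX B A :\: setX Tt S).
  rewrite c1 c2 => -[h1 _] h2.
  have : #|S| * #|Tt| <= #|A| * #|B| by apply: leq_mul.
  nia.
apply: (ar2 hDel hcount hN _ _ _ hMin); [by rewrite hs hsa | by rewrite ht htb | lia].
Qed.
Lemma set2_eqE (T : finType) (a b x y : T) : a != b ->
  ([set x; y] == [set a; b]) = ((x, y) == (a, b)) || ((x, y) == (b, a)).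
Proof.
move=> ab; apply/idP/idP.
  move/eqP => e.
  have hx : x \in [set a; b] by rewrite -e set21.
  have hy : y \in [set a; b] by rewrite -e set22.
  have hxy : x != y.
    apply/negP => /eqP exy; subst y; move: (cards2 a b); rewrite -e ab setUid cards1. by [].
  move: hx hy; rewrite !inE => /orP[] /eqP ? /orP[] /eqP ?; subst; rewrite ?eqxx ?orbT //=;
    by rewrite eqxx in hxy.
by case/orP => /eqP [-> ->] //; rewrite setUC.
Qed.

Lemma card_pairs (T : finType) (P : T -> T -> bool) :
  #|[set p : T * T | P p.1 p.2]| = \sum_x #|[set y | P x y]|.
Proof.
rewrite -sum1dep_card -(pair_big_dep xpredT P (fun _ _ => 1)) /=.
by apply: eq_bigr => x _; rewrite sum1dep_card.
Qed.

Lemma pairs2 (T : finType) (E : {set {set T}}) : (forall e, e \in E -> #|e| = 2) ->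
  #|[set p : T * T | [set p.1; p.2] \in E]| = 2 * #|E|.
Proof.
move=> hE; rewrite -sum1dep_card.
rewrite (partition_big (fun p : T * T => [set p.1; p.2]) (mem E)) //=.
rewrite mulnC -sum_nat_const.
apply: eq_bigr => e eE.
have /cards2P [a [b [ab ee]]] : #|e| == 2 by rewrite hE.
subst e.
have c2 : #|[set (a, b); (b, a)]| = 2 by rewrite cards2 xpair_eqE (negbTE ab).
rewrite sum1dep_card -c2.
apply: eq_card => -[x y]; rewrite !inE /=.
rewrite -set2_eqE //; case: eqP => [->|]; by rewrite ?andbF ?andbT.
Qed.
Lemma V2_facts n (G : {set {set 'I_n}}) : in_V2 G ->
  [/\ exists g, g \in G,
      #|G| = #|[set F : {set 'I_n} | (#|F| == 2) && (F \notin G)]|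
    & forall F : {set 'I_n}, #|F| = 3 -> exists2 g, g \in G & g \subset F].
Proof.
case=> [[_ hf] h2]; split.
- have := hf 0; rewrite /fvec.
  have : set0 \in [set F in sr_complex G | #|F| == 0].
    rewrite !inE cards0 eqxx andbT; apply/forall_inP => g gG.
    apply/negP => /subset_leq_card; rewrite cards0 h2 //.
  move=> h0 e; have : 0 < #|[set F in facet_complex G | #|F| == 0]|.
    by rewrite e; apply/card_gt0P; exists set0.
  case/card_gt0P => F; rewrite !inE => /andP[/exists_inP [g gG _] _]; by exists g.
- have := hf 2; rewrite /fvec => e.
  have eG : [set F in facet_complex G | #|F| == 2] = G.
    apply/setP => F; rewrite !inE; apply/idP/idP; last first.
      move=> FG; rewrite h2 // eqxx andbT; apply/exists_inP; by exists F.
    case/andP => /exists_inP [g gG Fg] /eqP F2.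
    have: F == g by rewrite eqEcard Fg h2 // F2.
    by move/eqP ->.
  transitivity #|[set F in facet_complex G | #|F| == 2]|; first by rewrite eG.
  rewrite e; apply: eq_card => F; rewrite !inE.
  case: (boolP (#|F| == 2)) => F2; rewrite ?andbF ?andbT //.
  apply/forall_inP/idP.
    by move=> h; apply/negP => FG; have := h F FG; rewrite subxx.
  move=> FG g gG; apply/negP => gF.
  have: g == F by rewrite eqEcard gF (eqP F2) h2.
  by move/eqP => egF; subst g; rewrite gG in FG.
- move=> F F3.
  have e := hf 3; rewrite /fvec in e.
  have : #|[set F in facet_complex G | #|F| == 3]| = 0.
    apply/eqP; rewrite cards_eq0; apply/eqP/setP => F'; rewrite !inE.
    apply/negP => /andP[/exists_inP [g gG Fg] /eqP F'3].
    by have := subset_leq_card Fg; rewrite F'3 h2.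
  rewrite e => /eqP; rewrite cards_eq0 => /eqP h0.
  have : F \notin [set F in sr_complex G | #|F| == 3] by rewrite h0 inE.
  rewrite !inE F3 eqxx andbT => /forall_inPn [g gG]; rewrite negbK => gF.
  by exists g.
Qed.

Definition rG n (G : {set {set 'I_n}}) : rel 'I_n := fun x y => (x != y) && ([set x; y] \notin G).

Lemma rG_sym n (G : {set {set 'I_n}}) x y : rG G x y = rG G y x.
Proof. by rewrite /rG eq_sym setUC. Qed.

Lemma rG_irr n (G : {set {set 'I_n}}) x : ~~ rG G x x.
Proof. by rewrite /rG eqxx. Qed.

Lemma rG_tri n (G : {set {set 'I_n}}) : in_V2 G ->
  forall x y z, rG G x y -> rG G y z -> rG G x z -> False.
Proof.
move=> hV x y z /andP[xy hxy] /andP[yz hyz] /andP[xz hxz].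
have [_ _ htri] := V2_facts hV.
have h2 := hV.2.
have F3 : #|[set x; y; z]| = 3.
  rewrite setUC cardsU1 cards2 xy !inE negb_or eq_sym xz eq_sym yz.
  by [].
have [g gG gF] := htri _ F3.
have /cards2P [u [v [uv eg]]] : #|g| == 2 by rewrite h2.
subst g.
have hyx : [set y; x] \notin G by rewrite setUC.
have hzy : [set z; y] \notin G by rewrite setUC.
have hzx : [set z; x] \notin G by rewrite setUC.
have uF : u \in [set x; y; z] by apply: (subsetP gF); rewrite set21.
have vF : v \in [set x; y; z] by apply: (subsetP gF); rewrite set22.
move: uF vF gG uv; rewrite !inE.
by case/orP => [/orP[]|] /eqP -> /orP[/orP[]|] /eqP ->;
  rewrite ?eqxx ?(negbTE hxy) ?(negbTE hyx) ?(negbTE hyz) ?(negbTE hzy) ?(negbTE hxz) ?(negbTE hzx).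
Qed.

Lemma count_r n (G : {set {set 'I_n}}) : in_V2 G ->
  2 * #|[set p : 'I_n * 'I_n | rG G p.1 p.2]| = n * n - n.
Proof.
move=> hV; have [_ hGH _] := V2_facts hV; have h2 := hV.2.
set H := [set F : {set 'I_n} | (#|F| == 2) && (F \notin G)].
have e1 : [set p : 'I_n * 'I_n | rG G p.1 p.2] = [set p | [set p.1; p.2] \in H].
  apply/setP => -[x y]; rewrite !inE /rG cards2 /=.
  by case: (x != y).
have eH : #|[set p : 'I_n * 'I_n | rG G p.1 p.2]| = 2 * #|G|.
  by rewrite e1 pairs2 ?hGH // => e; rewrite inE => /andP[/eqP].
have e2 : #|[set p : 'I_n * 'I_n | [set p.1; p.2] \in G]| = 2 * #|G| := pairs2 h2.
have e3 : #|[set p : 'I_n * 'I_n | p.1 != p.2]| = n * n - n.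
  rewrite (card_pairs (fun x y => x != y)) (eq_bigr (fun _ => n.-1)); last first.
    move=> x _; have := cardsC1 x; rewrite card_ord => <-; apply: eq_card => y.
    by rewrite !inE eq_sym.
  rewrite sum_nat_const card_ord; case: n {G hV hGH h2 H e1 eH e2} => // m; rewrite mulnSr; lia.
set D := [set p : 'I_n * 'I_n | p.1 != p.2].
set Q := [set p : 'I_n * 'I_n | [set p.1; p.2] \in G].
have e4 := cardsID Q D.
have eDQ : D :&: Q = Q.
  apply/setP => -[x y]; rewrite !inE /=; apply/andP/idP => [[] //|xyG]; split => //.
  by move: (h2 _ xyG); rewrite cards2; case: (x != y).
have e5 : D :\: Q = [set p : 'I_n * 'I_n | rG G p.1 p.2].
  by apply/setP => -[x y]; rewrite !inE /rG /= andbC.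
rewrite eDQ e5 e2 e3 eH in e4.
lia.
Qed.

Lemma W_sub n (G : {set {set 'I_n}}) (X : {set 'I_n}) :
  bip (rG G) setT X -> W_B X \subset G.
Proof.
move=> hb; apply/subsetP => e; rewrite inE => /andP[e2 eX].
have /cards2P [a [b [ab ee]]] := e2; subst e.
apply/negPn/negP => abG.
have := hb a b (in_setT a) (in_setT b) (introT andP (conj ab abG)).
case/orP: eX => /subsetP h.
  by rewrite (h a (set21 a b)) (h b (set22 a b)).
by move: (h a (set21 a b)) (h b (set22 a b)); rewrite !inE => /negbTE -> /negbTE ->.
Qed.

Lemma W_bip n (G : {set {set 'I_n}}) (X : {set 'I_n}) :
  W_B X \subset G -> bip (rG G) setT X.
Proof.
move=> hW x y _ _ /andP[xy xyG]; apply/negP => /eqP exy.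
move/negP: xyG; apply; apply: (subsetP hW); rewrite inE cards2 xy /=.
case hx: (x \in X) exy => exy.
  by apply/orP; left; apply/subsetP => u; rewrite !inE => /orP[] /eqP ->.
by apply/orP; right; apply/subsetP => u; rewrite !inE => /orP[] /eqP ->; rewrite ?hx -?exy ?hx.
Qed.

Lemma bipC (T : finType) (r : rel T) U X : bip r U X -> bip r U (~: X).
Proof. by move=> hb x y xU yU rxy; rewrite !inE; have := hb x y xU yU rxy; case: (x \in X); case: (y \in X). Qed.

Lemma ar3 n p q z w l1 l2 : n*n - n <= 4*(p*q + z*w) -> p+q+z+w = n -> 2 <= n ->
  l1 = p + z -> l2 = p + w -> l1 <= n./2 -> l2 <= n./2 -> l1 = l2.
Proof.
move=> h1 h2 h3 h4 h5 h6 h7.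
have hA := amgm p q. have hB := amgm z w.
have h8: 2 * ((p+q)*(z+w)) <= n by nia.
have [ha|ha]: p + q = 0 \/ 1 <= p+q by lia.
  lia.
have [hb|hb]: z + w = 0 \/ 1 <= z+w by lia.
  lia.
nia.
Qed.

Lemma DP_setT (T : finType) (r : rel T) :
  DP r setT = #|[set p : T * T | r p.1 p.2]|.
Proof. by apply: eq_card => p; rewrite !inE. Qed.

Unset Implicit Arguments.

Theorem theorem4p6 (n : nat) : n <> 5 ->
  (forall G : {set {set 'I_n}},
      in_V2 G <-> exists l, (1 <= l <= n./2)%N /\ in_W l G) /\
  (forall (l1 l2 : nat) (G : {set {set 'I_n}}),
      (1 <= l1 <= n./2)%N -> (1 <= l2 <= n./2)%N ->
      in_W l1 G -> in_W l2 G -> l1 = l2).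
Proof.
move=> n5.
have n2 : forall G : {set {set 'I_n}}, in_V2 G -> 2 <= n.
  move=> G hV; have [[g gG] _ _] := V2_facts hV.
  by rewrite -(hV.2 g gG) -[X in _ <= X]card_ord max_card.
split.
  move=> G; split; last by case=> l [_ [hV _]].
  move=> hV; have hn2 := n2 G hV.
  have hc := count_r hV.
  have rs := @rG_sym n G. have ri := @rG_irr n G. have rt := rG_tri hV.
  have [X hX] : exists X, bip (rG G) setT X.
    case: (classic (exists X, bip (rG G) setT X)) => // hno.
    have [h5 hb] := main_bound rs ri rt (cardsT _) (fun X h => hno (ex_intro _ X h)).
    rewrite card_ord DD_DP DP_setT in h5 hb.
    exfalso; apply: n5; move: hb; rewrite hc => hb; nia.
  have [[x y] ] : exists p : 'I_n * 'I_n, p \in [set p : 'I_n * 'I_n | rG G p.1 p.2].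
    apply/card_gt0P; nia.
  rewrite inE /= => rxy.
  have hxy := hX x y (in_setT x) (in_setT y) rxy.
  have h0 : 0 < #|X|.
    by apply/card_gt0P; case hx: (x \in X) hxy => /=; [exists x | move/negbNE => hy; exists y].
  have h1 : 0 < #|~: X|.
    by apply/card_gt0P; case hx: (x \in X) hxy => /=; [move=> hy; exists y; rewrite inE | exists x; rewrite inE hx].
  have hC := cardsC X; rewrite card_ord in hC.
  have [a [b [ea eb]]] : exists a b, #|X| = a /\ #|~: X| = b by exists #|X|, #|~: X|.
  rewrite ea eb in hC h0 h1.
  case: (leqP a n./2) => hl.
    exists a; split; first by apply/andP; split.
    split => //; exists X; split => //; last exact: W_sub.
    by rewrite ea; apply/andP; split => //; lia.
  exists b; split; first by apply/andP; split => //; lia.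
  split => //; exists (~: X); split => //; last by apply: W_sub; apply: bipC.
  by rewrite eb; apply/andP; split => //; lia.
move=> l1 l2 G hl1 hl2 [hV [B1 [_ e1 W1]]] [_ [B2 [_ e2 W2]]].
have hn2 := n2 G hV.
have hc := count_r hV.
have hb1 := W_bip W1. have hb2 := W_bip W2.
set P := B1 :&: B2. set Q := ~: (B1 :|: B2). set Z := B1 :\: B2. set W := B2 :\: B1.
have sub : [set p : 'I_n * 'I_n | rG G p.1 p.2] \subset
   ((setX P Q :|: setX Q P) :|: setX Z W) :|: setX W Z.
  apply/subsetP => -[x y]; rewrite inE /= => rxy.
  have := hb1 x y (in_setT x) (in_setT y) rxy.
  have := hb2 x y (in_setT x) (in_setT y) rxy.
  rewrite !inE /=.
  by case: (x \in B1); case: (y \in B1); case: (x \in B2); case: (y \in B2).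
have c1 := subset_leq_card sub.
have u1 := (leq_card_setU ((setX P Q :|: setX Q P) :|: setX Z W) (setX W Z)).1.
have u2 := (leq_card_setU (setX P Q :|: setX Q P) (setX Z W)).1.
have u3 := (leq_card_setU (setX P Q) (setX Q P)).1.
rewrite !cardsX in u1 u2 u3.
have k1 : #|P| + #|Z| = l1 by rewrite -e1 cardsID.
have k2 : #|P| + #|W| = l2 by rewrite -e2 /P setIC cardsID.
have k3 := cardsUI B1 B2.
have k4 := cardsC (B1 :|: B2).
rewrite card_ord in k4.
rewrite -/P -/Q in k3 k4.
have [D eD] : exists D, #|[set p : 'I_n * 'I_n | rG G p.1 p.2]| = D by eexists.
have [U1 eU1] : exists U1, #|setX P Q :|: setX Q P :|: setX Z W :|: setX W Z| = U1 by eexists.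
have [U2 eU2] : exists U2, #|setX P Q :|: setX Q P :|: setX Z W| = U2 by eexists.
have [U3 eU3] : exists U3, #|setX P Q :|: setX Q P| = U3 by eexists.
have [U eU] : exists U, #|B1 :|: B2| = U by eexists.
have [p ep] : exists p, #|P| = p by eexists.
have [q eq] : exists q, #|Q| = q by eexists.
have [z ez] : exists z, #|Z| = z by eexists.
have [w ew] : exists w, #|W| = w by eexists.
rewrite ?eD ?eU1 ?eU2 ?eU3 ?eU ?ep ?eq ?ez ?ew in hc c1 u1 u2 u3 k1 k2 k3 k4.
rewrite e1 e2 in k3.
apply: (@ar3 n p q z w l1 l2) => //; try lia.
Qed.
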